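(* Let $\mathcal{L}_{\mathrm{std}}=\{u,u^2,u^3,u_x,u_{xx},u_{xxx},u_{xxxx},u\cdot u_x,u\cdot u_{xx},u^2\cdot u_x\}$ and $\mathcal{L}_G^{\mathrm{theory}}=\{u_x,u_{xx},u_{xxx},u_{xxxx},u\cdot u_x\}$. Consider the family of autonomous evolution PDEs $u_t=F$ where $F$ is a real linear combination of the terms of $\mathcal{L}_{\mathrm{std}}$ (and the functions $1,u,u^2,u_x,u_{xx},u\cdot u_x$ are linearly independent on the jet space $J^{(2)}$). Then $\mathcal{L}_G^{\mathrm{theory}}$ is the unique maximal sublibrary of $\mathcal{L}_{\mathrm{std}}$ consisting of terms that can appear (with a free coefficient, or, for $u\cdot u_x$, with the fixed Galilean coefficient $-1$) in some PDE of this family admitting the Galilean generator $t\partial_x+\partial_u$: every term of $\mathcal{L}_G^{\mathrm{theory}}$ appears with nonzero coefficient in at least one Galilean-invariant PDE of the family, and no term of $\mathcal{L}_{\mathrm{std}}\setminus\mathcal{L}_G^{\mathrm{theory}}$ can appear with nonzero coefficient in any Galilean-invariant PDE of the family.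
   Context: $u=u(x,t)$ is a scalar field, subscripts denote partial derivatives. A PDE $u_t=F$ admits (is invariant under) the Galilean generator $\mathbf v=t\partial_x+\partial_u$ if the prolonged vector field $\mathrm{pr}\,\mathbf v$ annihilates $u_t-F$ on solutions; equivalently, the Galilean boost $(x,t,u)\mapsto(x+ct,t,u+c)$ maps solutions to solutions for all $c\in\mathbb R$. *)

(* Defs.v *)
From Stdlib Require Import Reals List.
Import ListNotations.
Open Scope R_scope.

Inductive term : Type :=
  | T_u | T_u2 | T_u3 | T_ux | T_uxx | T_uxxx | T_uxxxx
  | T_uux | T_uuxx | T_u2ux.

Definition L_std : list term :=
  [T_u; T_u2; T_u3; T_ux; T_uxx; T_uxxx; T_uxxxx; T_uux; T_uuxx; T_u2ux].

Definition L_G_theory : list term := [T_ux; T_uxx; T_uxxx; T_uxxxx; T_uux].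

Record jet : Type := mkJet {
  j_u : R; j_ux : R; j_uxx : R; j_uxxx : R; j_uxxxx : R; j_ut : R }.

Definition eval_term (s : term) (J : jet) : R :=
  match s with
  | T_u => j_u J
  | T_u2 => j_u J ^ 2
  | T_u3 => j_u J ^ 3
  | T_ux => j_ux J
  | T_uxx => j_uxx J
  | T_uxxx => j_uxxx J
  | T_uxxxx => j_uxxxx J
  | T_uux => j_u J * j_ux J
  | T_uuxx => j_u J * j_uxx J
  | T_u2ux => j_u J ^ 2 * j_ux J
  end.

Definition rhs (a : term -> R) (J : jet) : R :=
  fold_right Rplus 0 (map (fun s => a s * eval_term s J) L_std).

Definition on_equation (a : term -> R) (J : jet) : Prop := j_ut J = rhs a J.

(* Prolongation to the jet space of the Galilean boost
   (x,t,u) |-> (x + c t, t, u + c):  u ~> u + c, x-derivatives unchanged,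
   u_t ~> u_t - c u_x. *)
Definition boost_jet (c : R) (J : jet) : jet :=
  mkJet (j_u J + c) (j_ux J) (j_uxx J) (j_uxxx J) (j_uxxxx J)
        (j_ut J - c * j_ux J).

(* The PDE u_t = F admits the Galilean generator t d_x + d_u: the (prolonged)
   boost maps the equation manifold to itself for every c. *)
Definition galilean_invariant (a : term -> R) : Prop :=
  forall (c : R) (J : jet), on_equation a J -> on_equation a (boost_jet c J).

(* Main.v *)
Require Import Defs.
From Stdlib Require Import Reals List Lra.
Open Scope R_scope.

Definition wit (s : term) : R :=
  match s with
  | T_uux => -1 | T_ux | T_uxx | T_uxxx | T_uxxxx => 1 | _ => 0 end.

Lemma wit_inv : galilean_invariant wit.
Proof.
  intros c [u ux uxx uxxx uxxxx ut] H; unfold on_equation, rhs in *; simpl in *.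
  rewrite H; ring.
Qed.

Lemma nec (a : term -> R) : galilean_invariant a ->
  a T_u = 0 /\ a T_u2 = 0 /\ a T_u3 = 0 /\ a T_uux = -1 /\ a T_uuxx = 0 /\ a T_u2ux = 0.
Proof.
  intro inv.
  assert (E : forall c ux uxx,
    rhs a (mkJet 0 ux uxx 0 0 0) - c * ux = rhs a (mkJet (0 + c) ux uxx 0 0 0)).
  { intros c ux uxx.
    pose proof (inv c (mkJet 0 ux uxx 0 0 (rhs a (mkJet 0 ux uxx 0 0 0))) eq_refl) as H.
    unfold on_equation in H; simpl in H. rewrite H. unfold rhs; simpl. reflexivity. }
  pose proof (E 1 0 0) as E1. pose proof (E (-1) 0 0) as E2.
  pose proof (E 2 0 0) as E3. pose proof (E 1 0 1) as E4.
  pose proof (E 1 1 0) as E5. pose proof (E (-1) 1 0) as E6.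
  unfold rhs in *; simpl in *.
  ring_simplify in E1. ring_simplify in E2. ring_simplify in E3.
  ring_simplify in E4. ring_simplify in E5. ring_simplify in E6.
  repeat split; lra.
Qed.

Theorem mainTheorem2 :
  (forall s : term, In s L_G_theory ->
     exists a : term -> R, galilean_invariant a /\ a s <> 0) /\
  (forall s : term, In s L_std -> ~ In s L_G_theory ->
     forall a : term -> R, galilean_invariant a -> a s = 0) /\
  (forall a : term -> R, galilean_invariant a -> a T_uux = -1).
Proof.
  split; [|split].
  - intros s Hs. exists wit. split; [exact wit_inv|].
    destruct s; simpl in *; try lra; intuition discriminate.
  - intros s _ Hn a Ha. destruct (nec a Ha) as (H1&H2&H3&H4&H5&H6).
    destruct s; auto; exfalso; apply Hn; simpl; tauto.
  - intros a Ha. apply (nec a Ha).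
Qed.
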